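(* Let $d,q$ be integers with $0\le q<d$, $\gcd(d,q)=1$ and $d\mid q^3+1$, let $\xi$ be a primitive $d$-th root of unity, and $G=\langle\mathrm{diag}(1,\xi,\xi^q),B\rangle\subset\mathrm{GL}_3(\mathbb{C})$ with $B$ the cyclic permutation matrix $(x,y,z)\mapsto(y,z,x)$. Then the number of conjugacy classes of $G$ equals $\frac{d^2+8\gcd(d,q^2-q+1)}{3}$. *)

(* Defs.v *)
(* C is modelled by algC (algebraic complex numbers). *)
From HB Require Import structures.
From mathcomp Require Import all_boot all_order all_algebra all_field.
Set Implicit Arguments. Unset Strict Implicit. Unset Printing Implicit Defensive.
Import Order.TTheory GRing.Theory Num.Theory.
Local Open Scope ring_scope.

Definition diagD (xi : algC) (q : nat) : 'M[algC]_3 :=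
  \matrix_(i < 3, j < 3)
    (if i == j then (if (i : nat) == 0%N then 1 else if (i : nat) == 1%N then xi else xi ^+ q)
     else 0).

Definition permB : 'M[algC]_3 :=
  \matrix_(i < 3, j < 3) ((j : nat) == ((i : nat).+1 %% 3)%N)%:R.

Inductive in_gen (n : nat) (S : seq 'M[algC]_n) : 'M[algC]_n -> Prop :=
  | gen_one : in_gen S 1%:M
  | gen_mul x g : x \in S -> in_gen S g -> in_gen S (x *m g)
  | gen_mulV x g : x \in S -> in_gen S g -> in_gen S (invmx x *m g).

Definition conj_in (n : nat) (S : seq 'M[algC]_n) (x y : 'M[algC]_n) : Prop :=
  exists g, in_gen S g /\ y = invmx g *m x *m g.

Definition num_conj_classes (n : nat) (S : seq 'M[algC]_n) (k : nat) : Prop :=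
  exists reps : seq 'M[algC]_n,
    [/\ size reps = k,
        forall x, x \in reps -> in_gen S x,
        forall i j, (i < k)%N -> (j < k)%N ->
          conj_in S (nth 0 reps i) (nth 0 reps j) -> i = j
      & forall x, in_gen S x -> exists2 r, r \in reps & conj_in S r x].

(* Main.v *)
Require Import Defs.
From HB Require Import structures.
From mathcomp Require Import all_boot all_order all_algebra all_field all_fingroup.
From mathcomp Require Import zify.
Set Implicit Arguments. Unset Strict Implicit. Unset Printing Implicit Defensive.
Import Order.TTheory GRing.Theory Num.Theory.

Lemma count_mult (N d' g : nat) : 0 < d' -> 0 < g -> N = d' * g ->
  \sum_(a < N) (d' %| a) = g.
Proof.
move=> d0 g0 ->; have N0 : 0 < d' * g by rewrite muln_gt0 d0.
rewrite -[in RHS](mulKn g d0) divn_count_dvd.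
rewrite -(big_mkord xpredT (fun a => (d' %| a) : nat)) big_ltn // /= dvdn0.
by rewrite big_nat_recr //= dvdn_mulr // addnC.
Qed.

Lemma count_dvd (d m : nat) : 0 < d -> \sum_(a < d) (d %| a * m) = gcdn d m.
Proof.
move=> d0; set g := gcdn d m.
have g0 : 0 < g by rewrite gcdn_gt0 d0.
have gd : g %| d by exact: dvdn_gcdl.
set d' := d %/ g.
have Hd : d = d' * g by rewrite divnK.
have d'0 : 0 < d' by rewrite divn_gt0 // dvdn_leq.
have E a : (d %| a * m) = (d' %| a).
  have -> : (d %| a * m) = (d %| gcdn (a * d) (a * m)) by rewrite dvdn_gcd (dvdn_mull _ (dvdnn d)).
  by rewrite -muln_gcdr -/g {1}Hd dvdn_pmul2r.
under eq_bigr do rewrite E.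
exact: count_mult Hd.
Qed.

Local Open Scope ring_scope.

Section Model.
Variables (n q : nat).
Local Notation Zd := 'I_n.+1.
Local Notation V := (Zd * Zd)%type.

Definition sig (v : V) : V := (v.2, v.2 *+ q - v.1 *+ (q ^ 2)).

Lemma sigD v w : sig (v + w) = sig v + sig w.
Proof.
case: v w => a b [c e]; rewrite /sig /=; congr (_, _).
by rewrite !mulrnDl opprD addrACA.
Qed.

Lemma sig0 : sig 0 = 0.
Proof. by rewrite /sig /= !mul0rn subr0. Qed.

Lemma sigN v : sig (- v) = - sig v.
Proof. by apply/eqP; rewrite -subr_eq0 opprK -sigD addNr sig0. Qed.

Lemma sigB v w : sig (v - w) = sig v - sig w.
Proof. by rewrite sigD sigN. Qed.

Lemma Zd_char (x : Zd) : x *+ n.+1 = 0.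
Proof. by apply: val_inj; rewrite Zp_mulrn /= modnMl. Qed.

Hypothesis Hq : (n.+1 %| q ^ 3 + 1)%N.

Lemma Zd_q3 (x : Zd) : x *+ (q ^ 3) = - x.
Proof.
apply/eqP; rewrite -subr_eq0 opprK -mulrSr -addn1.
by case/dvdnP: Hq => t ->; rewrite mulrnA Zd_char.
Qed.

Lemma sig3 v : sig (sig (sig v)) = v.
Proof.
case: v => a b; rewrite /sig /=; congr (_, _).
  rewrite mulrnBl -!mulrnA mulnn -expnSr Zd_q3 opprK.
  by rewrite addrAC subrr add0r.
rewrite !mulrnBl -!mulrnA ?mulnn -?expnS -?expnSr -?expnD /=.
by rewrite addrAC subrr add0r Zd_q3 opprK.
Qed.

Definition act (e : 'I_3) (v : V) : V := iter e sig v.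

Lemma actD e v w : act e (v + w) = act e v + act e w.
Proof. rewrite /act; elim: (nat_of_ord e) => //= m ->; exact: sigD. Qed.

Lemma act0v e : act e 0 = 0.
Proof. rewrite /act; elim: (nat_of_ord e) => //= m ->; exact: sig0. Qed.

Lemma actN e v : act e (- v) = - act e v.
Proof. by apply/eqP; rewrite -subr_eq0 opprK -actD addNr act0v. Qed.

Lemma act0 v : act 0 v = v.
Proof. by []. Qed.

Lemma actA e f v : act e (act f v) = act (e + f) v.
Proof.
rewrite /act; case: e => [[|[|[|//]]] He]; case: f => [[|[|[|//]]] Hf] //=;
  by rewrite ?sig3.
Qed.
End Model.

Definition E (n q : nat) (H : (n.+1 %| q ^ 3 + 1)%N) : Type :=
  (('I_n.+1 * 'I_n.+1) * 'I_3)%type.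

Section Group.
Variables (n q : nat) (H : (n.+1 %| q ^ 3 + 1)%N).
HB.instance Definition _ := Finite.copy (E H) (('I_n.+1 * 'I_n.+1) * 'I_3)%type.

Definition emul (x y : E H) : E H := (x.1 + act q x.2 y.1, x.2 + y.2).
Definition eone : E H := (0, 0).
Definition einv (x : E H) : E H := (- act q (- x.2) x.1, - x.2).

Lemma emulA : associative emul.
Proof.
move=> [v e] [w f] [u g]; rewrite /emul /=.
by rewrite actD (actA H) addrA addrA.
Qed.

Lemma emul1 : left_id eone emul.
Proof. by move=> [v e]; rewrite /emul /= add0r act0 add0r. Qed.

Lemma emulV : left_inverse eone einv emul.
Proof.
by move=> [v e]; rewrite /emul /= !addNr.
Qed.

HB.instance Definition _ := Finite_isGroup.Build (E H) emulA emul1 emulV.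
End Group.

Section Mat.
Variables (n q : nat) (H : (n.+1 %| q ^ 3 + 1)%N) (xi : algC).
Hypothesis Hxi : n.+1.-primitive_root xi.
Local Notation Zd := 'I_n.+1.
Local Notation V := (Zd * Zd)%type.

Definition tri (v : V) (i : 'I_3) : Zd :=
  if (i : nat) == 0%N then v.1 else if (i : nat) == 1%N then v.2
  else v.2 *+ q - v.1 *+ (q ^ 2).

Lemma triD v w i : tri (v + w) i = tri v i + tri w i.
Proof.
rewrite /tri; case: ifP => // _; case: ifP => // _.
by case: v w => a b [c e] /=; rewrite !mulrnDl opprD addrACA.
Qed.

Lemma tri0 i : tri 0 i = 0.
Proof. by rewrite /tri; case: ifP => // _; case: ifP => // _; rewrite !mul0rn subr0. Qed.

Lemma tri_sig v i : tri (sig q v) i = tri v (i + 1).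
Proof.
case: i => [[|[|[|//]]] Hi]; rewrite /tri //=.
have := sig3 H v; case: v => a b; rewrite /sig /=.
by case.
Qed.

Lemma tri_act e v i : tri (act q e v) i = tri v (i + e).
Proof.
case: e => [[|[|[|//]]] He]; rewrite /act /=.
- by congr tri; apply: val_inj; case: i => [[|[|[|//]]] Hi].
- by rewrite tri_sig.
- by rewrite !tri_sig; congr tri; apply: val_inj; case: i => [[|[|[|//]]] Hi].
Qed.

Lemma xi_neq0 : xi != 0.
Proof.
apply/negP => /eqP x0; have := prim_expr_order Hxi.
by rewrite x0 expr0n /= => /eqP; rewrite eq_sym oner_eq0.
Qed.

Lemma pwD (x y : Zd) : xi ^+ ((x + y)%R : Zd) = xi ^+ x * xi ^+ y.
Proof. by rewrite /= (prim_expr_mod Hxi) exprD. Qed.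

Definition phi (x : E H) : 'M[algC]_3 :=
  \matrix_(i, j) ((j == i + x.2)%:R * xi ^+ tri x.1 i).

Lemma phiM (x y : E H) : phi (x * y)%g = phi x *m phi y.
Proof.
case: x y => [v e] [w f]; apply/matrixP => i j; rewrite !mxE.
rewrite (bigD1 (i + e)) //= big1 => [|k /negbTE kn]; last by rewrite !mxE kn mul0r mul0r.
rewrite !mxE eqxx mul1r addr0 /=.
change ((j == i + (e + f))%:R * xi ^+ tri (v + act q e w) i =
  xi ^+ tri v i * ((j == i + e + f)%:R * xi ^+ tri w (i + e))).
rewrite triD pwD tri_act addrA.
by rewrite mulrCA mulrA.
Qed.

Lemma phi1 : phi 1%g = 1%:M.
Proof.
apply/matrixP => i j; rewrite !mxE.
change ((j == i + 0)%:R * xi ^+ tri 0 i = (i == j)%:R).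
by rewrite tri0 expr0 mulr1 addr0 eq_sym.
Qed.

Lemma phi_inj : injective phi.
Proof.
move=> [v e] [w f] /matrixP Hm.
have ef : e = f.
  have := Hm 0 (0 + e); rewrite !mxE /= eqxx mul1r.
  case: eqP => [/addrI //|_]; rewrite mul0r => /eqP.
  by rewrite expf_eq0 (negbTE xi_neq0) andbF.
subst f.
have Ht i : tri v i = tri w i.
  have := Hm i (i + e); rewrite !mxE /= eqxx !mul1r => /eqP.
  rewrite (eq_prim_root_expr Hxi) !modn_small ?ltn_ord // => /eqP.
  exact: val_inj.
by clear Hm; case: v w Ht => a b [c d] Ht; have := Ht 0; have := Ht 1; rewrite /tri /= => -> ->.
Qed.


Lemma one_mulrn (x : Zd) : Zp1 *+ (x : nat) = x :> Zd.
Proof. by apply: val_inj; rewrite Zp_mulrn /= modnMml mul1n modn_small. Qed.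

Lemma emulE (x y : E H) : (x * y)%g = (x.1 + act q x.2 y.1, x.2 + y.2).
Proof. by []. Qed.

Local Notation S := [:: diagD xi q; permB].
Definition g1 : E H := ((0, Zp1), 0).
Definition g2 : E H := ((0, 0), 1).

Lemma diagD_phi : diagD xi q = phi g1.
Proof.
apply/matrixP => i j; rewrite !mxE.
change ((if i == j then if (i : nat) == 0%N then 1 else if (i : nat) == 1%N then xi else xi ^+ q else 0) =
  (j == i + 0)%:R * xi ^+ tri (0, Zp1) i).
rewrite addr0; case: (eqVneq i j) => [|ne]; last by rewrite ?mul0r.
rewrite ?eqxx mul1r /tri /=; case: ifP => _; first by rewrite expr0.
case: ifP => _; first by rewrite (prim_expr_mod Hxi) expr1.
by rewrite mul0rn subr0 Zp_mulrn /= modnMml mul1n (prim_expr_mod Hxi).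
Qed.

Lemma permB_phi : permB = phi g2.
Proof.
apply/matrixP => i j; rewrite !mxE.
change (((j : nat) == ((i : nat).+1 %% 3)%N)%:R = (j == i + 1)%:R * xi ^+ tri 0 i :> algC).
rewrite tri0 expr0 mulr1.
by case: i => [[|[|[|//]]] Hi]; case: j => [[|[|[|//]]] Hj].
Qed.

Lemma phi_unit g : phi g *m phi (g^-1)%g = 1%:M.
Proof. by rewrite -phiM mulgV phi1. Qed.

Lemma invmx_phi g : invmx (phi g) = phi (g^-1)%g.
Proof.
have [U _] := mulmx1_unit (phi_unit g).
by rewrite -[LHS]mulmx1 -(phi_unit g) mulmxA mulVmx // mul1mx.
Qed.

Lemma in_gen_phi x : in_gen S x -> exists g, x = phi g.
Proof.
elim=> [|y g Hy _ [h ->]|y g Hy _ [h ->]]; first by exists 1%g; rewrite phi1.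
- move: Hy; rewrite !inE => /orP[] /eqP ->.
    by exists (g1 * h)%g; rewrite phiM diagD_phi.
  by exists (g2 * h)%g; rewrite phiM permB_phi.
- move: Hy; rewrite !inE => /orP[] /eqP ->.
    by exists (g1^-1 * h)%g; rewrite phiM diagD_phi invmx_phi.
  by exists (g2^-1 * h)%g; rewrite phiM permB_phi invmx_phi.
Qed.

Lemma in_gen_mul x y : in_gen S x -> in_gen S y -> in_gen S (x *m y).
Proof.
move=> Hx Hy; elim: Hx => [|z g Hz _ IH|z g Hz _ IH]; first by rewrite mul1mx.
- by rewrite -mulmxA; apply: gen_mul.
- by rewrite -mulmxA; apply: gen_mulV.
Qed.

Lemma in_gen_gen x : x \in S -> in_gen S x.
Proof. by move=> Hx; rewrite -[x]mulmx1; apply: gen_mul => //; apply: gen_one. Qed.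

Lemma in_gen_all g : in_gen S (phi g).
Proof.
have P1 : in_gen S (phi g1) by rewrite -diagD_phi; apply: in_gen_gen; rewrite !inE eqxx.
have P2 : in_gen S (phi g2) by rewrite -permB_phi; apply: in_gen_gen; rewrite !inE eqxx orbT.
have PM a b : in_gen S (phi a) -> in_gen S (phi b) -> in_gen S (phi (a * b)%g).
  by rewrite phiM; apply: in_gen_mul.
have PX a k : in_gen S (phi a) -> in_gen S (phi (a ^+ k)%g).
  move=> Pa; elim: k => [|k IH]; first by rewrite expg0 phi1; apply: gen_one.
  by rewrite expgS; apply: PM.
have powv (v : V) k : (((v, 0) : E H) ^+ k)%g = (v *+ k, 0).
  elim: k => [|k IH]; first by rewrite expg0 mulr0n.
  by rewrite expgS IH emulE /act /= mulrS addr0.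
have pow2 (e : 'I_3) : (g2 ^+ e)%g = ((0, 0), e).
  case: e => [[|[|[|//]]] He]; rewrite ?expgS ?expg0 /g2 ?emulE /=;
    rewrite ?act0v ?addr0 /=; (try change (((0, 0), 0) = ((0, 0), Ordinal He) :> E H)); congr (_, _); try exact: ord_inj; rewrite add0r; exact: act0v.
have y_def : (g2 * g1 * g2 * g2)%g = (((Zp1, Zp1 *+ q - 0 *+ (q ^ 2)) : V), 0) :> E H.
  have a0 e : act q e ((0, 0) : V) = 0 := @act0v n q e.
  rewrite !emulE /= !a0 !addr0 add0r /act /=; congr (_, _); exact: ord_inj.
have a0 e : act q e ((0, 0) : V) = 0 := @act0v n q e.
case: g => [[a b] e].
have [m Hm] : {m : Zd | m = (b - a *+ q)%R} by exists (b - a *+ q)%R.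
have -> : (((a, b), e) : E H) =
  ((g2 * g1 * g2 * g2) ^+ a * g1 ^+ m * g2 ^+ e)%g.
  rewrite y_def !powv pow2 !emulE /= a0 addr0 /act /= !pairMnE /=.
  have -> : (0 + 0 + e = e)%R by rewrite !add0r.
  congr (_, _); apply: injective_projections => /=.
    by rewrite mul0rn addr0 one_mulrn.
  by rewrite mul0rn subr0 -mulrnA mulnC mulrnA !one_mulrn Hm addrC subrK.
have Py : in_gen S (phi (g2 * g1 * g2 * g2)%g) by do 3 apply: (PM) => //.
by apply: (PM); [apply: (PM)|]; apply: (PX).
Qed.

Definition psi (x : 'M[algC]_3) : E H := odflt 1%g [pick g | phi g == x].

Lemma phi_psi x : in_gen S x -> phi (psi x) = x.
Proof.
move=> /in_gen_phi [g ->]; rewrite /psi; case: pickP => [h /eqP //|].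
by move/(_ g); rewrite eqxx.
Qed.

Lemma psi_phi g : psi (phi g) = g.
Proof. by apply: phi_inj; rewrite phi_psi //; apply: in_gen_all. Qed.

Lemma conj_phi u w : conj_in S (phi u) (phi w) <-> w \in (u ^: [set: E H])%g.
Proof.
split.
  move=> [g [/in_gen_phi [h ->] Hw]]; apply/imsetP; exists h; rewrite ?inE //.
  by apply: phi_inj; rewrite Hw invmx_phi -!phiM /conjg mulgA.
move=> /imsetP [h _ ->]; exists (phi h); split; first exact: in_gen_all.
by rewrite invmx_phi -!phiM /conjg mulgA.
Qed.

Lemma count_classes k : num_conj_classes S k -> k = #|classes [set: E H]|%g.
Proof.
move=> [reps [Hsz Hin Hinj Hcov]].
pose cls (i : 'I_k) := (psi (nth 0 reps i) ^: [set: E H])%g.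
have Hr (i : 'I_k) : in_gen S (nth 0 reps i).
  by apply: Hin; apply: mem_nth; rewrite Hsz.
have cls_inj : injective cls.
  move=> i j Hij; apply: val_inj; apply: Hinj; rewrite ?ltn_ord //.
  rewrite -(phi_psi (Hr i)) -(phi_psi (Hr j)); apply/conj_phi.
  by rewrite -/(cls i) Hij class_refl.
have -> : classes [set: E H]%g = [set cls i | i in [set: 'I_k]].
  apply/setP => C; apply/imsetP/imsetP => [[x _ ->]|[i _ ->]]; last first.
    by exists (psi (nth 0 reps i)); rewrite ?inE.
  have [r rin Hc] := Hcov _ (in_gen_all x).
  have ir : (index r reps < k)%N by rewrite -Hsz index_mem.
  exists (Ordinal ir); first by rewrite inE.
  rewrite /cls /= nth_index //; apply/class_eqP.
  by apply/conj_phi; rewrite phi_psi //; exact: Hin.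
by rewrite (card_imset _ cls_inj) cardsT card_ord.
Qed.

End Mat.


Lemma eq_sub (V : zmodType) (a b c d : V) : (a - b == c - d) = (a + d == c + b).
Proof.
apply/eqP/eqP => E.
  by rewrite -(subrK b a) E addrAC subrK.
by rewrite -(addrK d a) E addrAC addrK.
Qed.

Section Count.
Variables (n q : nat) (H : (n.+1 %| q ^ 3 + 1)%N).
Local Notation Zd := 'I_n.+1.
Local Notation V := (Zd * Zd)%type.
Local Notation s := (sig q).

Definition fx := (\sum_(v : V) (s v == v))%N.

Lemma sig_fix2 (v : V) : (s (s v) == v) = (s v == v).
Proof.
apply/eqP/eqP => E; last by rewrite !E.
by rewrite -{1}E (sig3 H).
Qed.

Lemma shift (u : V) : (\sum_(w : V) (s (w - u)%R == (w - u)%R))%N = fx.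
Proof.
rewrite (reindex_inj (addIr u)) /=; apply: eq_bigr => w _; by rewrite addrK.
Qed.

Lemma c0f1 (v w : V) : (w + s v == v + w) = (s v == v).
Proof. by rewrite [v + w]addrC (inj_eq (addrI w)). Qed.
Lemma c0f2 (v w : V) : (w + s (s v) == v + w) = (s v == v).
Proof. by rewrite [v + w]addrC (inj_eq (addrI w)) sig_fix2. Qed.
Lemma ce10 (v w : V) : (w + v == v + s w) = (s w == w).
Proof. by rewrite [w + v]addrC (inj_eq (addrI v)) eq_sym. Qed.
Lemma ce20 (v w : V) : (w + v == v + s (s w)) = (s w == w).
Proof. by rewrite [w + v]addrC (inj_eq (addrI v)) eq_sym sig_fix2. Qed.
Lemma c11 (v w : V) : (w + s v == v + s w) = (s (w - v) == w - v).
Proof. by rewrite sigB eq_sub eq_sym [v + _]addrC. Qed.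
Lemma c22 (v w : V) : (w + s (s v) == v + s (s w)) = (s (w - v) == w - v).
Proof. by rewrite -sig_fix2 !sigB eq_sub eq_sym [v + _]addrC. Qed.
Lemma c12 (v w : V) : (w + s (s v) == v + s w) = (s (w - (v + s v)) == w - (v + s v)).
Proof.
rewrite sigB sigD eq_sub !addrA [w + s v + _]addrAC (inj_eq (addIr (s v))).
by rewrite eq_sym [s w + v]addrC.
Qed.
Lemma c21 (v w : V) : (w + s v == v + s (s w)) = (s (v - (w + s w)) == v - (w + s w)).
Proof.
rewrite sigB sigD eq_sub !addrA [v + s w + _]addrAC (inj_eq (addIr (s w))).
by rewrite [s v + w]addrC.
Qed.

Lemma sum_pair (T1 T2 : finType) (F : T1 * T2 -> nat) :
  (\sum_(p : T1 * T2) F p = \sum_(a : T1) \sum_(b : T2) F (a, b))%N.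
Proof. by rewrite pair_big; apply: eq_bigr => [[a b]]. Qed.

Lemma sumV_const (c : nat) : (\sum_(w : V) c)%N = (n.+1 ^ 2 * c)%N.
Proof. by rewrite sum_nat_const card_prod card_ord. Qed.

Lemma sum_comm :
  (\sum_(a : E H) \sum_(x : E H) ((x * a)%g == (a * x)%g))%N = (n.+1 ^ 2 * (n.+1 ^ 2 + 8 * fx))%N.
Proof.
have step (a x : E H) : ((x * a)%g == (a * x)%g) = (x.1 + act q x.2 a.1 == a.1 + act q a.2 x.1).
  case: a x => [v e] [w f]; rewrite !emulE /= xpair_eqE [f + e]addrC eqxx andbT //.
under eq_bigr do under eq_bigr do rewrite step.
pose C (a x : V * 'I_3) : nat := (x.1 + act q x.2 a.1 == a.1 + act q a.2 x.1).
change (\sum_(a : V * 'I_3) \sum_(x : V * 'I_3) C a x = n.+1 ^ 2 * (n.+1 ^ 2 + 8 * fx))%N.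
rewrite sum_pair.
under eq_bigr => v _ do under eq_bigr => e _ do rewrite sum_pair.
under eq_bigr => v _ do rewrite exchange_big.
under eq_bigr => v _ do under eq_bigr => w _ do
  rewrite !big_ord_recl !big_ord0 /C /act /= c0f1 c0f2 ce10 c11 c12 ce20 c21 c22 [(w + v)%R]addrC eqxx !addn0.
under eq_bigr => v _ do rewrite !big_split.
set R := (n.+1 ^ 2 * _)%N.
rewrite !big_split /=.
have L1 : (\sum_(v : V) \sum_(w : V) true = n.+1 ^ 2 * n.+1 ^ 2)%N.
  by under eq_bigr do rewrite sumV_const; rewrite sumV_const muln1.
have L2 : (\sum_(v : V) \sum_(w : V) (s v == v) = n.+1 ^ 2 * fx)%N.
  by under eq_bigr do rewrite sumV_const; rewrite -big_distrr.
have L3 : (\sum_(v : V) \sum_(w : V) (s w == w) = n.+1 ^ 2 * fx)%N.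
  by rewrite sumV_const.
have L4 : (\sum_(v : V) \sum_(w : V) (s (w - v)%R == (w - v)%R) = n.+1 ^ 2 * fx)%N.
  by under eq_bigr do rewrite shift; rewrite sumV_const.
have L5 : (\sum_(v : V) \sum_(w : V) (s (w - (v + s v))%R == (w - (v + s v))%R) = n.+1 ^ 2 * fx)%N.
  by under eq_bigr do rewrite shift; rewrite sumV_const.
have L6 : (\sum_(v : V) \sum_(w : V) (s (v - (w + s w))%R == (v - (w + s w))%R) = n.+1 ^ 2 * fx)%N.
  by rewrite exchange_big; under eq_bigr do rewrite shift; rewrite sumV_const.
rewrite L1 L2 L3 L4 L5 L6 /R mulnDr mulnCA.
move: (n.+1 ^ 2 * n.+1 ^ 2)%N (n.+1 ^ 2 * fx)%N => X Y; lia.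
Qed.

Lemma cardE3 : #|[set: E H]| = (3 * n.+1 ^ 2)%N.
Proof.
rewrite cardsT.
change (#|{: (V * 'I_3)%type}| = (3 * n.+1 ^ 2)%N).
by rewrite card_prod card_prod !card_ord mulnC.
Qed.

Lemma fixJ_card (a : E H) :
  #|'Fix_([set: E H] | 'J)[a]|%g = (\sum_(x : E H) ((x * a)%g == (a * x)%g))%N.
Proof.
rewrite -sum1_card big_mkcond /=; apply: eq_bigr => x _.
have -> : (x \in 'Fix_([set: E H] | 'J)[a])%g = ((x * a)%g == (a * x)%g).
  rewrite inE in_setT /= conjgC (inj_eq (mulgI a)).
  by apply/afix1P/eqP.
by case: ifP.
Qed.

Lemma card_classesE :
  (#|classes [set: E H]|%g * (3 * n.+1 ^ 2) = n.+1 ^ 2 * (n.+1 ^ 2 + 8 * fx))%N.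
Proof.
have A : [acts [set: E H], on [set: E H] | 'J]%g.
  by apply/actsP => a _ x; rewrite !inE.
have := Frobenius_Cauchy A.
rewrite cardE3 => <-; rewrite -sum_comm.
by apply: eq_big => [a|a _]; [rewrite inE | rewrite fixJ_card].
Qed.
Lemma fx_eq : fx = gcdn n.+1 (q ^ 2 - q + 1).
Proof.
rewrite /fx sum_pair -count_dvd //; apply: eq_bigr => a _.
rewrite (bigD1 a) //= big1 => [|b /negbTE nb]; last by rewrite xpair_eqE nb.
rewrite xpair_eqE eqxx /= addn0 subr_eq -val_eqE /= !Zp_mulrn /= modnDmr.
have qq : (a * q <= a * q ^ 2)%N.
  rewrite leq_mul2l; case: q => [|q']; rewrite ?orbT //.
  by apply/orP; right; rewrite expnS expn1 -{1}(mul1n q'.+1) leq_mul2r; apply/orP; right.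
rewrite eq_sym eqn_mod_dvd; last exact: leq_trans qq (leq_addl _ _).
rewrite [in RHS]mulnDr muln1 mulnBr; congr (dvdn _ _).
lia.
Qed.
End Count.
Unset Implicit Arguments.
Theorem mainTheorem9 (d q : nat) (xi : algC) (k : nat) :
  (q < d)%N -> coprime d q -> (d %| q ^ 3 + 1)%N ->
  d.-primitive_root xi ->
  num_conj_classes [:: diagD xi q; permB] k ->
  (k%:R : rat) = ((d ^ 2 + 8 * gcdn d (q ^ 2 - q + 1))%N)%:R / 3.
Proof.
move=> _ _ Hd Hxi Hk.
have d0 : (0 < d)%N := prim_order_gt0 Hxi.
case: d d0 Hd Hxi Hk => // n _ Hd Hxi Hk.
have Ek := count_classes Hd Hxi Hk.
have := card_classesE Hd; rewrite -Ek fx_eq // => E.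
have E3 : (k * 3 = n.+1 ^ 2 + 8 * gcdn n.+1 (q ^ 2 - q + 1))%N.
  apply/eqP; rewrite -(@eqn_pmul2r (n.+1 ^ 2)) ?expn_gt0 //.
  by rewrite -mulnA E mulnC.
rewrite -E3 natrM mulfK //.
Qed.
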